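(* Let $\mathbf{Lim}$ be the category of limit spaces, with cylinder $IX = X \times [0,1]$, $i_k(x) = (x,k)$ ($k=0,1$), $p : X\times[0,1]\to X$ the projection, initial object $\varnothing$ (the empty space), and $\mathrm{cof}$ the class of morphisms $i : B \to A$ having the homotopy extension property (defined below). Then $(\mathbf{Lim}, I, \mathrm{cof}, \varnothing)$ is an $I$-category.
   Context: Limit spaces: a convergence space is a set $X$ with a relation between filters on $X$ and points (written $\lambda \to x$) such that $\lambda \to x$, $\lambda\subseteq\lambda'$ imply $\lambda'\to x$, and the principal ultrafilter $\dot x \to x$; it is a limit space iff moreover $\lambda\to x$ and $\lambda'\to x$ imply $\lambda\cap\lambda'\to x$. Continuous maps: $\lambda\to x$ implies $f(\lambda)\to f(x)$, where $f(\lambda)$ is the filter generated by images. $[0,1]$ has its topological convergence ($\lambda \to x$ iff $\lambda$ contains the neighbourhood filter of $x$); products and pushouts are the initial/final structures in $\mathbf{Lim}$. Homotopy extension property of $i : B \to A$: for $k = 0$ and $k=1$, for every object $Y$ and morphisms $f : A \to Y$, $G : IB \to Y$ with $f \circ i = G \circ i_k$, there exists $H : IA \to Y$ with $H \circ i_k = f$ and $H \circ Ii = G$. An $I$-category is a tuple $(\mathcal{C}, \mathrm{cof}, (I,i_0,i_1,p), \varnothing)$ with $(I,i_0,i_1,p)$ a cylinder (functor $I$, natural transformations $i_0,i_1 : \mathrm{Id} \to I$, $p : I \to \mathrm{Id}$, $p i_k = \mathrm{id}$), $\varnothing$ an initial object, satisfying: (1) Cylinder axiom: $I\varnothing = \varnothing$.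 (2) Pushout axiom: for a cofibration $i : B \to A$ and any $f : B \to X$ the pushout $A \cup_B X$ exists, the induced map $\bar i : X \to A\cup_B X$ is a cofibration, and $I(A\cup_B X) = IA \cup_{IB} IX$. (3) Cofibration axiom: isomorphisms are cofibrations; $\varnothing \to X$ is a cofibration for every $X$; composites of cofibrations are cofibrations; every cofibration has the homotopy extension property. (4) Interchange axiom: for every $X$ there is $T : IIX \to IIX$ with $T i_k = I i_k$ and $T I(i_k) = i_k$ for $k=0,1$. (5) Relative cylinder axiom: for a cofibration $i : B \to A$, the map $j = (i_0, Ii, i_1) : A \cup_B IB \cup_B A \to IA$ induced from the pushout of $A \xleftarrow{i} B \xrightarrow{i_0} IB \xleftarrow{i_1} B \xrightarrow{i} A$ is a cofibration. *)

(* Defs.v *)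
From Stdlib Require Import Reals Lra.
Open Scope R_scope.

Definition isFilter {X : Type} (F : (X -> Prop) -> Prop) : Prop :=
  F (fun _ => True) /\ ~ F (fun _ => False) /\
  (forall U V : X -> Prop, F U -> (forall x, U x -> V x) -> F V) /\
  (forall U V : X -> Prop, F U -> F V -> F (fun x => U x /\ V x)).

Definition principal {X : Type} (x : X) : (X -> Prop) -> Prop := fun U => U x.
Definition fsub {X : Type} (F G : (X -> Prop) -> Prop) : Prop := forall U, F U -> G U.
Definition finter {X : Type} (F G : (X -> Prop) -> Prop) : (X -> Prop) -> Prop :=
  fun U => F U /\ G U.
Definition fimage {X Y : Type} (f : X -> Y) (F : (X -> Prop) -> Prop) : (Y -> Prop) -> Prop :=
  fun V => exists U, F U /\ forall u, U u -> V (f u).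

Record LimSpace := {
  carrier :> Type;
  lconv : ((carrier -> Prop) -> Prop) -> carrier -> Prop;
  lconv_filter : forall F x, lconv F x -> isFilter F;
  lconv_super : forall F G x, lconv F x -> isFilter G -> fsub F G -> lconv G x;
  lconv_principal : forall x, lconv (principal x) x;
  lconv_inter : forall F G x, lconv F x -> lconv G x -> lconv (finter F G) x }.
Arguments lconv {_} _ _.

Definition continuous {X Y : LimSpace} (f : X -> Y) : Prop :=
  forall F x, lconv F x -> lconv (fimage f F) (f x).

Definition isIso {X Y : LimSpace} (f : X -> Y) : Prop :=
  continuous f /\ exists g : Y -> X, continuous g /\
    (forall x, g (f x) = x) /\ (forall y, f (g y) = y).

Lemma isFilter_principal {X : Type} (x : X) : isFilter (principal x).
Proof.
  unfold isFilter, principal; repeat split; auto.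
Qed.

Lemma isFilter_finter {X : Type} (F G : (X -> Prop) -> Prop) :
  isFilter F -> isFilter G -> isFilter (finter F G).
Proof.
  unfold isFilter, finter.
  intros (F1 & F2 & F3 & F4) (G1 & G2 & G3 & G4).
  split; [split; auto|split; [|split]].
  - intros [H _]; auto.
  - intros U V [HF HG] HUV; split; eauto.
  - intros U V [HF HG] [HF' HG']; split; auto.
Qed.

Lemma isFilter_fimage {X Y : Type} (f : X -> Y) F :
  isFilter F -> isFilter (fimage f F).
Proof.
  unfold isFilter, fimage.
  intros (F1 & F2 & F3 & F4).
  split; [|split; [|split]].
  - exists (fun _ => True); split; auto.
  - intros [W [HW HWV]]. apply F2. apply (F3 W); auto.
  - intros U V [W [HW HWU]] HUV. exists W; split; auto.
  - intros U V [W [HW HWU]] [W' [HW' HWU']].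
    exists (fun x => W x /\ W' x); split; auto.
    intros u [h1 h2]; split; auto.
Qed.

Lemma fimage_principal {X Y : Type} (f : X -> Y) (x : X) :
  fsub (principal (f x)) (fimage f (principal x)).
Proof.
  intros V HV. exists (fun u => V (f u)); split; auto.
Qed.

Lemma fimage_mono {X Y : Type} (f : X -> Y) F G :
  fsub F G -> fsub (fimage f F) (fimage f G).
Proof.
  intros H V [U [HU HUV]]; exists U; split; auto.
Qed.

Lemma fimage_finter {X Y : Type} (f : X -> Y) F G :
  isFilter F -> isFilter G ->
  fsub (finter (fimage f F) (fimage f G)) (fimage f (finter F G)).
Proof.
  intros (F1 & F2 & F3 & F4) (G1 & G2 & G3 & G4) V [[U [HU HUV]] [U' [HU' HUV']]].
  exists (fun x => U x \/ U' x); split.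
  - split; [apply (F3 U) | apply (G3 U')]; auto.
  - intros u [h|h]; auto.
Qed.

Definition I01 : Type := {r : R | 0 <= r <= 1}.

Definition I01_conv (F : (I01 -> Prop) -> Prop) (t : I01) : Prop :=
  isFilter F /\
  forall eps, 0 < eps -> F (fun s => Rabs (proj1_sig s - proj1_sig t) < eps).

Lemma I01_conv_filter : forall F x, I01_conv F x -> isFilter F.
Proof. intros F x [H _]; exact H. Qed.

Lemma I01_conv_super : forall F G x, I01_conv F x -> isFilter G -> fsub F G -> I01_conv G x.
Proof. intros F G x [HF Hc] HG Hs; split; auto. Qed.

Lemma I01_conv_principal : forall x, I01_conv (principal x) x.
Proof.
  intros x; split; [apply isFilter_principal|].
  intros eps He; unfold principal. rewrite Rminus_diag, Rabs_R0; exact He.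
Qed.

Lemma I01_conv_inter : forall F G x, I01_conv F x -> I01_conv G x -> I01_conv (finter F G) x.
Proof.
  intros F G x [HF Hc] [HG Hc']; split.
  - apply isFilter_finter; auto.
  - intros eps He; split; auto.
Qed.

Definition UnitInterval : LimSpace :=
  {| carrier := I01; lconv := I01_conv;
     lconv_filter := I01_conv_filter; lconv_super := I01_conv_super;
     lconv_principal := I01_conv_principal; lconv_inter := I01_conv_inter |}.

Definition I01_zero : I01 := exist _ 0 (conj (Rle_refl 0) Rle_0_1).
Definition I01_one : I01 := exist _ 1 (conj Rle_0_1 (Rle_refl 1)).
Definition endpt (k : bool) : I01 := if k then I01_one else I01_zero.

Section Cyl.
Variable X : LimSpace.

Definition cyl_conv (F : (X * I01 -> Prop) -> Prop) (p : X * I01) : Prop :=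
  isFilter F /\ lconv (fimage fst F) (fst p) /\ I01_conv (fimage snd F) (snd p).

Lemma cyl_conv_filter : forall F x, cyl_conv F x -> isFilter F.
Proof. intros F x [H _]; exact H. Qed.

Lemma cyl_conv_super : forall F G x, cyl_conv F x -> isFilter G -> fsub F G -> cyl_conv G x.
Proof.
  intros F G x [HF [H1 H2]] HG Hs; split; [auto|split].
  - apply (lconv_super X (fimage fst F)); auto.
    + apply isFilter_fimage; auto.
    + apply fimage_mono; auto.
  - apply (I01_conv_super (fimage snd F)); auto.
    + apply isFilter_fimage; auto.
    + apply fimage_mono; auto.
Qed.

Lemma cyl_conv_principal : forall x, cyl_conv (principal x) x.
Proof.
  intros x; split; [apply isFilter_principal|split].
  - apply (lconv_super X (principal (fst x))).
    + apply lconv_principal.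
    + apply isFilter_fimage, isFilter_principal.
    + apply fimage_principal.
  - apply (I01_conv_super (principal (snd x))).
    + apply I01_conv_principal.
    + apply isFilter_fimage, isFilter_principal.
    + apply fimage_principal.
Qed.

Lemma cyl_conv_inter : forall F G x, cyl_conv F x -> cyl_conv G x -> cyl_conv (finter F G) x.
Proof.
  intros F G x [HF [H1 H2]] [HG [H1' H2']]; split; [apply isFilter_finter; auto|split].
  - apply (lconv_super X (finter (fimage fst F) (fimage fst G))).
    + apply lconv_inter; auto.
    + apply isFilter_fimage, isFilter_finter; auto.
    + apply fimage_finter; auto.
  - apply (I01_conv_super (finter (fimage snd F) (fimage snd G))).
    + apply I01_conv_inter; auto.
    + apply isFilter_fimage, isFilter_finter; auto.
    + apply fimage_finter; auto.
Qed.

Definition Cyl : LimSpace :=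
  {| carrier := X * I01; lconv := cyl_conv;
     lconv_filter := cyl_conv_filter; lconv_super := cyl_conv_super;
     lconv_principal := cyl_conv_principal; lconv_inter := cyl_conv_inter |}.
End Cyl.

Definition cyl_map {X Y : LimSpace} (f : X -> Y) : Cyl X -> Cyl Y :=
  fun z : X * I01 => (f (fst z), snd z).
Definition cyl_in {X : LimSpace} (k : bool) : X -> Cyl X :=
  fun x => (x, endpt k) : X * I01.
Definition cyl_proj {X : LimSpace} : Cyl X -> X := fun z : X * I01 => fst z.

Definition EmptyLim : LimSpace :=
  {| carrier := Empty_set;
     lconv := fun _ x => match x with end;
     lconv_filter := fun _ x _ => match x with end;
     lconv_super := fun _ _ x _ _ _ => match x with end;
     lconv_principal := fun x => match x with end;
     lconv_inter := fun _ _ x _ _ => match x with end |}.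
Definition empty_map (X : LimSpace) : EmptyLim -> X := fun e => match e with end.

Definition HEP {B A : LimSpace} (i : B -> A) : Prop :=
  forall (k : bool) (Y : LimSpace) (f : A -> Y) (G : Cyl B -> Y),
    continuous f -> continuous G ->
    (forall b, f (i b) = G (cyl_in k b)) ->
    exists H : Cyl A -> Y, continuous H /\
      (forall a, H (cyl_in k a) = f a) /\ (forall z, H (cyl_map i z) = G z).

Definition cof {B A : LimSpace} (i : B -> A) : Prop := continuous i /\ HEP i.

Definition IsPushout {B A X P : LimSpace} (i : B -> A) (f : B -> X)
    (u : A -> P) (v : X -> P) : Prop :=
  continuous u /\ continuous v /\ (forall b, u (i b) = v (f b)) /\
  forall (Y : LimSpace) (g : A -> Y) (h : X -> Y),
    continuous g -> continuous h -> (forall b, g (i b) = h (f b)) ->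
    exists k : P -> Y, continuous k /\
      (forall a, k (u a) = g a) /\ (forall x, k (v x) = h x) /\
      (forall k' : P -> Y, continuous k' ->
         (forall a, k' (u a) = g a) -> (forall x, k' (v x) = h x) ->
         forall p, k' p = k p).

(** colimit of  A <-i- B -i0-> IB <-i1- B -i-> A,  i.e. A ∪_B IB ∪_B A *)
Definition IsRelCylColimit {B A P : LimSpace} (i : B -> A)
    (a0 : A -> P) (c : Cyl B -> P) (a1 : A -> P) : Prop :=
  continuous a0 /\ continuous c /\ continuous a1 /\
  (forall b, a0 (i b) = c (cyl_in false b)) /\
  (forall b, a1 (i b) = c (cyl_in true b)) /\
  forall (Y : LimSpace) (g0 : A -> Y) (h : Cyl B -> Y) (g1 : A -> Y),
    continuous g0 -> continuous h -> continuous g1 ->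
    (forall b, g0 (i b) = h (cyl_in false b)) ->
    (forall b, g1 (i b) = h (cyl_in true b)) ->
    exists k : P -> Y, continuous k /\
      (forall a, k (a0 a) = g0 a) /\ (forall z, k (c z) = h z) /\
      (forall a, k (a1 a) = g1 a) /\
      (forall k' : P -> Y, continuous k' ->
         (forall a, k' (a0 a) = g0 a) -> (forall z, k' (c z) = h z) ->
         (forall a, k' (a1 a) = g1 a) -> forall p, k' p = k p).

(** (I, i0, i1, p) is a cylinder: I a functor, i_k and p natural, p i_k = id;
    ∅ is an initial object. *)
Definition Lim_cylinder_data : Prop :=
  (forall (X Y : LimSpace) (f : X -> Y), continuous f -> continuous (cyl_map f)) /\
  (forall (X : LimSpace) (z : Cyl X), cyl_map (fun x : X => x) z = z) /\
  (forall (X Y Z : LimSpace) (f : X -> Y) (g : Y -> Z) (z : Cyl X),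
      cyl_map (fun x => g (f x)) z = cyl_map g (cyl_map f z)) /\
  (forall (X : LimSpace) (k : bool), continuous (@cyl_in X k)) /\
  (forall X : LimSpace, continuous (@cyl_proj X)) /\
  (forall (X Y : LimSpace) (f : X -> Y) (k : bool) (x : X),
      cyl_map f (cyl_in k x) = cyl_in k (f x)) /\
  (forall (X Y : LimSpace) (f : X -> Y) (z : Cyl X),
      f (cyl_proj z) = cyl_proj (cyl_map f z)) /\
  (forall (X : LimSpace) (k : bool) (x : X), cyl_proj (cyl_in k x) = x) /\
  (forall Y : LimSpace, continuous (empty_map Y) /\
     forall g : EmptyLim -> Y, continuous g -> forall e, g e = empty_map Y e).

Definition cylinder_axiom : Prop :=
  exists f : Cyl EmptyLim -> EmptyLim, isIso f.

Definition pushout_axiom : Prop :=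
  forall (B A X : LimSpace) (i : B -> A) (f : B -> X),
    cof i -> continuous f ->
    exists (P : LimSpace) (u : A -> P) (v : X -> P),
      IsPushout i f u v /\ cof v /\
      IsPushout (cyl_map i) (cyl_map f) (cyl_map u) (cyl_map v).

Definition cofibration_axiom : Prop :=
  (forall (A B : LimSpace) (f : A -> B), isIso f -> cof f) /\
  (forall X : LimSpace, cof (empty_map X)) /\
  (forall (A B C : LimSpace) (f : A -> B) (g : B -> C),
      cof f -> cof g -> cof (fun a => g (f a))) /\
  (forall (B A : LimSpace) (i : B -> A), cof i -> HEP i).

Definition interchange_axiom : Prop :=
  forall X : LimSpace, exists T : Cyl (Cyl X) -> Cyl (Cyl X),
    continuous T /\
    forall k : bool,
      (forall z : Cyl X, T (cyl_in k z) = cyl_map (@cyl_in X k) z) /\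
      (forall z : Cyl X, T (cyl_map (@cyl_in X k) z) = cyl_in k z).

Definition relative_cylinder_axiom : Prop :=
  forall (B A : LimSpace) (i : B -> A), cof i ->
    (exists (P : LimSpace) (a0 : A -> P) (c : Cyl B -> P) (a1 : A -> P),
        IsRelCylColimit i a0 c a1) /\
    (forall (P : LimSpace) (a0 : A -> P) (c : Cyl B -> P) (a1 : A -> P),
        IsRelCylColimit i a0 c a1 ->
        forall j : P -> Cyl A, continuous j ->
          (forall a, j (a0 a) = cyl_in false a) ->
          (forall z, j (c z) = cyl_map i z) ->
          (forall a, j (a1 a) = cyl_in true a) ->
          cof j).

Definition Lim_is_ICategory : Prop :=
  Lim_cylinder_data /\ cylinder_axiom /\ pushout_axiom /\ cofibration_axiom /\
  interchange_axiom /\ relative_cylinder_axiom.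

(* Main.v *)
Require Import Defs.
From Stdlib Require Import Reals Lra Classical FunctionalExtensionality PropExtensionality ProofIrrelevance ClassicalEpsilon.
Open Scope R_scope.

Lemma fl_top {X} (F : (X -> Prop) -> Prop) : isFilter F -> F (fun _ => True).
Proof. intros [h _]; exact h. Qed.
Lemma fl_prop {X} (F : (X -> Prop) -> Prop) : isFilter F -> ~ F (fun _ => False).
Proof. intros [_ [h _]]; exact h. Qed.
Lemma fl_mono {X} (F : (X -> Prop) -> Prop) U V : isFilter F -> F U -> (forall x, U x -> V x) -> F V.
Proof. intros [_ [_ [h _]]]; eauto. Qed.
Lemma fl_and {X} (F : (X -> Prop) -> Prop) U V : isFilter F -> F U -> F V -> F (fun x => U x /\ V x).
Proof. intros [_ [_ [_ h]]]; eauto. Qed.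
Lemma fl_all {X} (F : (X -> Prop) -> Prop) U : isFilter F -> (forall x, U x) -> F U.
Proof. intros HF H. apply (fl_mono F (fun _ => True)); auto. apply fl_top; auto. Qed.
Lemma fl_nonempty {X} (F : (X -> Prop) -> Prop) U : isFilter F -> F U -> exists x, U x.
Proof.
  intros HF HU. apply NNPP; intro N. apply (fl_prop F HF).
  apply (fl_mono F U); auto. intros x Hx; apply N; eauto.
Qed.

Lemma lconv_isF {X : LimSpace} F (x : X) : lconv F x -> isFilter F.
Proof. apply lconv_filter. Qed.

Lemma cont_comp {X Y Z : LimSpace} (f : X -> Y) (g : Y -> Z) :
  continuous f -> continuous g -> continuous (fun x => g (f x)).
Proof.
  intros Hf Hg F x HF.
  apply (lconv_super Z (fimage g (fimage f F))).
  - apply Hg, Hf, HF.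
  - apply isFilter_fimage, (lconv_filter X F x HF).
  - intros V [U [[W [HW HWU]] HUV]]. exists W; split; auto.
Qed.

Lemma cont_ext {X Y : LimSpace} (f g : X -> Y) :
  (forall x, f x = g x) -> continuous f -> continuous g.
Proof.
  intros E Hf. assert (f = g) by (apply functional_extensionality; auto). subst; auto.
Qed.

Lemma cont_id {X : LimSpace} : continuous (fun x : X => x).
Proof.
  intros F x HF. apply (lconv_super X F); auto.
  - apply isFilter_fimage, (lconv_filter X F x HF).
  - intros U HU. exists U; split; auto.
Qed.

Lemma cont_const {X Y : LimSpace} (y : Y) : continuous (fun _ : X => y).
Proof.
  intros F x HF. apply (lconv_super Y (principal y)).
  - apply lconv_principal.
  - apply isFilter_fimage, (lconv_filter X F x HF).
  - intros V HV. exists (fun _ => True); split; auto. apply fl_top, (lconv_filter X F x HF).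
Qed.

Definition rcont {X : LimSpace} (phi : X -> R) : Prop :=
  forall F x, lconv F x -> forall eps, 0 < eps -> F (fun y => Rabs (phi y - phi x) < eps).

Lemma Rabs_lt_iff a e : Rabs a < e <-> - e < a /\ a < e.
Proof.
  split. intros H; destruct (Rabs_def2 _ _ H); split; lra.
  intros [h1 h2]; apply Rabs_def1; lra.
Qed.

Lemma rcont_const {X : LimSpace} c : rcont (fun _ : X => c).
Proof.
  intros F x HF eps He. apply fl_all. apply (lconv_filter X F x HF).
  intros y. rewrite Rminus_diag, Rabs_R0; lra.
Qed.

Lemma rcont_comp {X Y : LimSpace} (h : X -> Y) (phi : Y -> R) :
  continuous h -> rcont phi -> rcont (fun x => phi (h x)).
Proof.
  intros Hh Hp F x HF eps He.
  destruct (Hp _ _ (Hh F x HF) eps He) as [U [HU HUV]].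
  apply (fl_mono F U); auto. apply (lconv_filter X F x HF).
Qed.

Lemma rcont_lip2 {X : LimSpace} (phi psi : X -> R) (op : R -> R -> R) :
  (forall a b c d, Rabs (op a b - op c d) <= Rabs (a - c) + Rabs (b - d)) ->
  rcont phi -> rcont psi -> rcont (fun x => op (phi x) (psi x)).
Proof.
  intros Hop Hp Hq F x HF eps He.
  pose proof (lconv_filter X F x HF) as Hf.
  apply (fl_mono F (fun y => Rabs (phi y - phi x) < eps/2 /\ Rabs (psi y - psi x) < eps/2)).
  - auto.
  - apply fl_and; auto. apply Hp; auto; lra. apply Hq; auto; lra.
  - intros y [h1 h2]. specialize (Hop (phi y) (psi y) (phi x) (psi x)). lra.
Qed.

Lemma rcont_lip1 {X : LimSpace} (phi : X -> R) (op : R -> R) (K : R) :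
  0 < K -> (forall a c, Rabs (op a - op c) <= K * Rabs (a - c)) ->
  rcont phi -> rcont (fun x => op (phi x)).
Proof.
  intros HK Hop Hp F x HF eps He.
  pose proof (lconv_filter X F x HF) as Hf.
  apply (fl_mono F (fun y => Rabs (phi y - phi x) < eps / K)).
  - auto.
  - apply Hp; auto. apply Rdiv_lt_0_compat; lra.
  - intros y h. specialize (Hop (phi y) (phi x)).
    assert (K * Rabs (phi y - phi x) < K * (eps / K)) by (apply Rmult_lt_compat_l; lra).
    replace (K * (eps / K)) with eps in H by (field; lra). lra.
Qed.

Lemma rcont_plus {X : LimSpace} (phi psi : X -> R) :
  rcont phi -> rcont psi -> rcont (fun x => phi x + psi x).
Proof.
  apply (rcont_lip2 phi psi Rplus). intros a b c d.
  unfold Rabs; repeat destruct Rcase_abs; lra.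
Qed.
Lemma rcont_minus {X : LimSpace} (phi psi : X -> R) :
  rcont phi -> rcont psi -> rcont (fun x => phi x - psi x).
Proof.
  apply (rcont_lip2 phi psi Rminus). intros a b c d.
  unfold Rabs; repeat destruct Rcase_abs; lra.
Qed.
Lemma rcont_min {X : LimSpace} (phi psi : X -> R) :
  rcont phi -> rcont psi -> rcont (fun x => Rmin (phi x) (psi x)).
Proof.
  apply (rcont_lip2 phi psi Rmin). intros a b c d.
  unfold Rmin, Rabs; repeat destruct Rle_dec; repeat destruct Rcase_abs; lra.
Qed.
Lemma rcont_max {X : LimSpace} (phi psi : X -> R) :
  rcont phi -> rcont psi -> rcont (fun x => Rmax (phi x) (psi x)).
Proof.
  apply (rcont_lip2 phi psi Rmax). intros a b c d.
  unfold Rmax, Rabs; repeat destruct Rle_dec; repeat destruct Rcase_abs; lra.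
Qed.
Lemma rcont_scal {X : LimSpace} (c : R) (phi : X -> R) :
  rcont phi -> rcont (fun x => c * phi x).
Proof.
  apply (rcont_lip1 phi (fun a => c * a) (Rabs c + 1)).
  - pose proof (Rabs_pos c); lra.
  - intros a b. replace (c * a - c * b) with (c * (a - b)) by ring.
    rewrite Rabs_mult. pose proof (Rabs_pos (a - b)). nra.
Qed.


Definition clamp (r : R) : R := Rmax 0 (Rmin 1 r).
Lemma clamp_bounds r : 0 <= clamp r <= 1.
Proof. unfold clamp, Rmax, Rmin; repeat destruct Rle_dec; lra. Qed.
Definition mkI (r : R) : I01 := exist _ (clamp r) (clamp_bounds r).
Lemma clamp_id r : 0 <= r <= 1 -> clamp r = r.
Proof. unfold clamp, Rmax, Rmin; repeat destruct Rle_dec; lra. Qed.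
Lemma I01_eq (x y : I01) : proj1_sig x = proj1_sig y -> x = y.
Proof. destruct x as [x hx], y as [y hy]; simpl; intros ->. f_equal; apply proof_irrelevance. Qed.
Lemma mkI_eq (x : I01) r : proj1_sig x = r -> mkI r = x.
Proof. intros H; apply I01_eq; simpl. destruct x as [x hx]; simpl in *; subst; apply clamp_id; auto. Qed.
Lemma mkI_val r : 0 <= r <= 1 -> proj1_sig (mkI r) = r.
Proof. intros; simpl; apply clamp_id; auto. Qed.
Lemma mkI_ext r1 r2 : r1 = r2 -> mkI r1 = mkI r2.
Proof. intros ->; auto. Qed.
Definition I0 : I01 := I01_zero.
Definition I1 : I01 := I01_one.
Lemma I01_bnd (x : I01) : 0 <= proj1_sig x <= 1.
Proof. destruct x; auto. Qed.

Lemma rcont_clamp {X : LimSpace} (phi : X -> R) : rcont phi -> rcont (fun x => clamp (phi x)).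
Proof.
  apply (rcont_lip1 phi clamp 1). lra.
  intros a c. unfold clamp, Rmax, Rmin, Rabs; repeat destruct Rle_dec; repeat destruct Rcase_abs; lra.
Qed.

Definition Ival (x : I01) : R := proj1_sig x.

Lemma cont_intoI {X : LimSpace} (h : X -> UnitInterval) :
  rcont (fun x => proj1_sig (h x)) -> continuous h.
Proof.
  intros Hr F x HF. split.
  - apply isFilter_fimage, (lconv_filter X F x HF).
  - intros eps He. exists (fun y => Rabs (proj1_sig (h y) - proj1_sig (h x)) < eps); split; auto.
    apply Hr; auto.
Qed.

Lemma cont_mkI {X : LimSpace} (phi : X -> R) : rcont phi -> @continuous X UnitInterval (fun x => mkI (phi x)).
Proof. intros H. apply cont_intoI. simpl. apply rcont_clamp; auto. Qed.

Lemma rcont_I (F : (I01 -> Prop) -> Prop) t :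
  I01_conv F t -> forall eps, 0 < eps -> F (fun y => Rabs (proj1_sig y - proj1_sig t) < eps).
Proof. intros [_ H]; auto. Qed.

Lemma rcont_UI : @rcont UnitInterval (fun x => proj1_sig x).
Proof. intros F x HF. apply HF. Qed.

Lemma cont_fst {X : LimSpace} : @continuous (Cyl X) X (fun z => fst z).
Proof. intros F p [_ [H _]]; exact H. Qed.
Lemma cont_snd {X : LimSpace} : @continuous (Cyl X) UnitInterval (fun z => snd z).
Proof. intros F p [_ [_ H]]; exact H. Qed.
Lemma rcont_snd {X : LimSpace} : @rcont (Cyl X) (fun z => proj1_sig (snd z)).
Proof. apply (@rcont_comp (Cyl X) UnitInterval (fun z : Cyl X => snd z) (fun x : UnitInterval => proj1_sig x)). apply cont_snd. apply rcont_UI. Qed.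

Lemma cont_pair {X Z : LimSpace} (h1 : X -> Z) (h2 : X -> UnitInterval) :
  continuous h1 -> continuous h2 -> @continuous X (Cyl Z) (fun x => (h1 x, h2 x)).
Proof.
  intros H1 H2 F x HF. pose proof (lconv_filter X F x HF) as Hf. split; [|split].
  - apply isFilter_fimage; auto.
  - simpl. apply (lconv_super Z (fimage h1 F)); auto.
    + apply isFilter_fimage, isFilter_fimage; auto.
    + intros V [U [HU HUV]]. exists (fun p => V (fst p)). split; auto.
      exists U; split; auto.
  - simpl. apply (I01_conv_super (fimage h2 F)); auto. apply H2; auto.
    + apply isFilter_fimage, isFilter_fimage; auto.
    + intros V [U [HU HUV]]. exists (fun p => V (snd p)). split; auto.
      exists U; split; auto.
Qed.

Lemma cont_cyl_map {X Y : LimSpace} (f : X -> Y) : continuous f -> continuous (cyl_map f).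
Proof.
  intros Hf. unfold cyl_map. apply cont_pair.
  - apply (cont_comp (fun z : Cyl X => fst z) f); auto. apply cont_fst.
  - apply cont_snd.
Qed.

Lemma cont_cyl_in {X : LimSpace} k : continuous (@cyl_in X k).
Proof. unfold cyl_in. apply cont_pair. apply cont_id. apply cont_const. Qed.

Definition prodF {X T : Type} (G : (X -> Prop) -> Prop) (N : (T -> Prop) -> Prop) : (X * T -> Prop) -> Prop :=
  fun W => exists U V, G U /\ N V /\ forall x t, U x -> V t -> W (x, t).

Lemma isFilter_prodF {X T : Type} G N : isFilter G -> isFilter N -> isFilter (@prodF X T G N).
Proof.
  intros HG HN. split; [|split; [|split]].
  - exists (fun _ => True), (fun _ => True). repeat split; try apply fl_top; auto.
  - intros [U [V [HU [HV HW]]]]. destruct (fl_nonempty G U HG HU) as [x Hx].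
    destruct (fl_nonempty N V HN HV) as [t Ht]. exact (HW x t Hx Ht).
  - intros W W' [U [V [HU [HV HW]]]] HWW. exists U, V; repeat split; auto.
  - intros W W' [U [V [HU [HV HW]]]] [U' [V' [HU' [HV' HW']]]].
    exists (fun x => U x /\ U' x), (fun t => V t /\ V' t). repeat split; try apply fl_and; auto.
    apply HW; tauto. apply HW'; tauto.
Qed.

Lemma prodF_conv {X : LimSpace} (G : (X -> Prop) -> Prop) N a t :
  lconv G a -> I01_conv N t -> @lconv (Cyl X) (prodF G N) (a, t).
Proof.
  intros HG HN. pose proof (lconv_filter X G a HG) as Hg. pose proof (I01_conv_filter N t HN) as Hn.
  assert (Hp : isFilter (prodF G N)) by (apply isFilter_prodF; auto).
  split; [auto|split]; simpl.
  - apply (lconv_super X G); auto. apply isFilter_fimage; auto.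
    intros V HV. exists (fun p => V (fst p)); split; auto.
    exists V, (fun _ => True); repeat split; auto. apply fl_top; auto.
  - apply (I01_conv_super N); auto. apply isFilter_fimage; auto.
    intros V HV. exists (fun p => V (snd p)); split; auto.
    exists (fun _ => True), V; repeat split; auto. apply fl_top; auto.
Qed.

Lemma prodF_sub {X T : Type} (L : (X * T -> Prop) -> Prop) :
  isFilter L -> fsub (prodF (fimage fst L) (fimage snd L)) L.
Proof.
  intros HL W [U [V [[W1 [H1 H1']] [[W2 [H2 H2']] HW]]]].
  apply (fl_mono L (fun w => W1 w /\ W2 w)); auto. apply fl_and; auto.
  intros [x t] [a b]. apply HW; [apply (H1' _ a)|apply (H2' _ b)].
Qed.

Lemma paste {X Y : LimSpace} (phi : X -> R) (g1 g2 : X -> Y) :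
  rcont phi -> continuous g1 -> continuous g2 ->
  (forall x, phi x = 0 -> g1 x = g2 x) ->
  continuous (fun x => if Rle_dec (phi x) 0 then g1 x else g2 x).
Proof.
  intros Hp H1 H2 Hag F x HF.
  set (g := fun x => if Rle_dec (phi x) 0 then g1 x else g2 x).
  change (lconv (fimage g F) (g x)).
  pose proof (lconv_filter X F x HF) as Hf.
  assert (CP : (forall U, F U -> exists y, U y /\ phi y <= 0) -> phi x <= 0).
  { intros C. apply Rnot_lt_le; intro Hlt.
    destruct (C _ (Hp F x HF (phi x) Hlt)) as [y [Hy Hy']].
    apply Rabs_lt_iff in Hy. lra. }
  assert (CN : (forall U, F U -> exists y, U y /\ ~ phi y <= 0) -> 0 <= phi x).
  { intros C. apply Rnot_lt_le; intro Hlt.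
    destruct (C _ (Hp F x HF (- phi x) ltac:(lra))) as [y [Hy Hy']].
    apply Rabs_lt_iff in Hy. lra. }
  assert (gx1 : phi x <= 0 -> g x = g1 x).
  { intros h; unfold g; destruct Rle_dec; auto; lra. }
  assert (gx2 : 0 <= phi x -> g x = g2 x).
  { intros h; unfold g; destruct Rle_dec; auto. apply Hag; lra. }
  assert (Restr : forall (P : X -> Prop) (gg : X -> Y), continuous gg ->
            (forall y, P y -> g y = gg y) ->
            (forall U, F U -> exists y, U y /\ P y) ->
            lconv (fimage g (fun V => exists U, F U /\ forall y, U y -> P y -> V y)) (gg x)).
  { intros P gg Hgg Heq C.
    set (F1 := fun V => exists U, F U /\ forall y, U y -> P y -> V y).
    assert (HF1 : isFilter F1).
    { split; [|split; [|split]].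
      - exists (fun _ => True); split; auto. apply fl_top; auto.
      - intros [U [HU HUV]]. destruct (C U HU) as [y [a b]]. exact (HUV y a b).
      - intros U V [W [HW HWU]] HUV. exists W; split; auto.
      - intros U V [W [HW HWU]] [W' [HW' HWU']]. exists (fun y => W y /\ W' y); split.
        apply fl_and; auto. intros y [a b] c; split; auto. }
    assert (L1 : lconv F1 x).
    { apply (lconv_super X F); auto. intros U HU. exists U; split; auto. }
    apply (lconv_super Y (fimage gg F1)); auto. apply isFilter_fimage; auto.
    intros V [W [HW HWV]]. destruct HW as [U [HU HUW]].
    exists (fun y => U y /\ P y). split.
    - exists U; split; auto.
    - intros y [a b]. rewrite Heq; auto. }
  destruct (classic (exists U, F U /\ forall y, U y -> ~ phi y <= 0)) as [[U [HU HUn]]|NU].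
  - assert (0 <= phi x).
    { apply CN. intros U' HU'. destruct (fl_nonempty F (fun y => U y /\ U' y) Hf) as [y [a b]].
      apply fl_and; auto. exists y; auto. }
    rewrite gx2; auto.
    apply (lconv_super Y (fimage g2 F)); auto. apply isFilter_fimage; auto.
    intros V [W [HW HWV]]. exists (fun y => W y /\ U y); split. apply fl_and; auto.
    intros y [a b]. unfold g; destruct Rle_dec as [r|r]; auto. exfalso; apply (HUn y); auto.
  - destruct (classic (exists U, F U /\ forall y, U y -> phi y <= 0)) as [[U [HU HUn]]|NP].
    + assert (phi x <= 0).
      { apply CP. intros U' HU'. destruct (fl_nonempty F (fun y => U y /\ U' y) Hf) as [y [a b]].
        apply fl_and; auto. exists y; auto. }
      rewrite gx1; auto.
      apply (lconv_super Y (fimage g1 F)); auto. apply isFilter_fimage; auto.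
      intros V [W [HW HWV]]. exists (fun y => W y /\ U y); split. apply fl_and; auto.
      intros y [a b]. unfold g; destruct Rle_dec as [r|r]; auto. exfalso; apply r; auto.
    + assert (CPa : forall U, F U -> exists y, U y /\ phi y <= 0).
      { intros U HU. apply NNPP; intro N. apply NU. exists U; split; auto.
        intros y Hy Hy'. apply N; eauto. }
      assert (CNa : forall U, F U -> exists y, U y /\ ~ phi y <= 0).
      { intros U HU. apply NNPP; intro N. apply NP. exists U; split; auto.
        intros y Hy. apply NNPP; intro Hy'. apply N; eauto. }
      pose proof (CP CPa). pose proof (CN CNa).
      assert (L1 := Restr (fun y => phi y <= 0) g1 H1 ltac:(intros y hy; cbv beta in hy; unfold g; destruct Rle_dec; first [reflexivity | exfalso; tauto]) CPa).
      assert (L2 := Restr (fun y => ~ phi y <= 0) g2 H2 ltac:(intros y hy; cbv beta in hy; unfold g; destruct Rle_dec; first [reflexivity | exfalso; tauto]) CNa).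
      rewrite <- gx1 in L1 by lra. rewrite <- gx2 in L2 by lra.
      apply (lconv_super Y _ _ _ (lconv_inter Y _ _ _ L1 L2)). apply isFilter_fimage; auto.
      intros V [[W1 [[U1 [HU1 HW1]] HV1]] [W2 [[U2 [HU2 HW2]] HV2]]].
      exists (fun y => U1 y /\ U2 y); split. apply fl_and; auto.
      intros y [a b]. destruct (Rle_dec (phi y) 0) as [r|r]; [apply HV1|apply HV2]; auto.
Qed.


Definition sum_conv (A X : LimSpace) (F : ((A + X) -> Prop) -> Prop) (z : A + X) : Prop :=
  isFilter F /\ match z with
  | inl a => exists G, lconv G a /\ fsub (fimage inl G) F
  | inr x => exists G, lconv G x /\ fsub (fimage inr G) F end.

Lemma sum_conv_filter A X : forall F x, sum_conv A X F x -> isFilter F.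
Proof. intros F x [H _]; exact H. Qed.

Lemma sum_conv_super A X : forall F G x, sum_conv A X F x -> isFilter G -> fsub F G -> sum_conv A X G x.
Proof.
  intros F G [a|x] [HF [H [H1 H2]]] HG Hs; split; auto; exists H; split; auto; intros U HU; auto.
Qed.

Lemma sum_conv_principal A X : forall x, sum_conv A X (principal x) x.
Proof.
  intros [a|x]; split; try apply isFilter_principal.
  - exists (principal a); split. apply lconv_principal. intros V [U [HU HUV]]. apply HUV, HU.
  - exists (principal x); split. apply lconv_principal. intros V [U [HU HUV]]. apply HUV, HU.
Qed.

Lemma sum_conv_inter A X : forall F G x, sum_conv A X F x -> sum_conv A X G x -> sum_conv A X (finter F G) x.
Proof.
  intros F G [a|x] [HF [H1 [L1 S1]]] [HG [H2 [L2 S2]]]; (split; [apply isFilter_finter; auto|]);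
  exists (finter H1 H2); (split; [apply lconv_inter; auto|]);
  intros V [U [[HU1 HU2] HUV]]; split; [apply S1|apply S2|apply S1|apply S2]; exists U; auto.
Qed.

Definition SumSp (A X : LimSpace) : LimSpace :=
  {| carrier := A + X; lconv := sum_conv A X;
     lconv_filter := sum_conv_filter A X; lconv_super := sum_conv_super A X;
     lconv_principal := sum_conv_principal A X; lconv_inter := sum_conv_inter A X |}.

Lemma cont_inl {A X : LimSpace} : @continuous A (SumSp A X) inl.
Proof.
  intros F a HF. split. apply isFilter_fimage, (lconv_filter A F a HF).
  exists F; split; auto. intros U HU; auto.
Qed.
Lemma cont_inr {A X : LimSpace} : @continuous X (SumSp A X) inr.
Proof.
  intros F a HF. split. apply isFilter_fimage, (lconv_filter X F a HF).
  exists F; split; auto. intros U HU; auto.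
Qed.

Definition sum_elim {A X Y : Type} (g : A -> Y) (h : X -> Y) (z : A + X) : Y :=
  match z with inl a => g a | inr x => h x end.

Lemma cont_sum_elim {A X Y : LimSpace} (g : A -> Y) (h : X -> Y) :
  continuous g -> continuous h -> @continuous (SumSp A X) Y (sum_elim g h).
Proof.
  intros Hg Hh F [a|x] [HF [G [HG HGF]]].
  - apply (lconv_super Y (fimage g G)); [apply Hg; auto|apply isFilter_fimage; auto|].
    intros V [U [HU HUV]]. exists (fun z => match z with inl a => U a | inr _ => False end); split.
    + apply HGF. exists U; split; auto.
    + intros [a'|x'] Hw; simpl in *; [apply HUV, Hw|destruct Hw].
  - apply (lconv_super Y (fimage h G)); [apply Hh; auto|apply isFilter_fimage; auto|].
    intros V [U [HU HUV]]. exists (fun z => match z with inr a => U a | inl _ => False end); split.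
    + apply HGF. exists U; split; auto.
    + intros [a'|x'] Hw; simpl in *; [destruct Hw|apply HUV, Hw].
Qed.

Definition cyl_sum_elim {A X Y : Type} (g : A * I01 -> Y) (h : X * I01 -> Y) (w : (A + X) * I01) : Y :=
  match fst w with inl a => g (a, snd w) | inr x => h (x, snd w) end.

Lemma cont_cyl_sum_elim {A X Y : LimSpace} (g : Cyl A -> Y) (h : Cyl X -> Y) :
  continuous g -> continuous h -> @continuous (Cyl (SumSp A X)) Y (cyl_sum_elim g h).
Proof.
  intros Hg Hh L [[a|x] t] [HL [[_ [G [HG HGF]]] HN]]; simpl in *.
  - apply (lconv_super Y (fimage g (prodF G (fimage snd L)))).
    + apply Hg. apply prodF_conv; auto.
    + apply isFilter_fimage; auto.
    + intros V [W [[U [V' [HU [HV' HW]]]] HWV]].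
      destruct (HGF (fun z => match z with inl a => U a | inr _ => False end)) as [W1 [HW1 HWU1]].
      { exists U; split; auto. }
      destruct HV' as [W2 [HW2 HW2']].
      exists (fun w => W1 w /\ W2 w); split. apply fl_and; auto.
      intros [[a'|x'] t'] [h1 h2]; unfold cyl_sum_elim; simpl.
      * apply HWV, HW. apply (HWU1 _ h1). apply (HW2' _ h2).
      * destruct (HWU1 _ h1).
  - apply (lconv_super Y (fimage h (prodF G (fimage snd L)))).
    + apply Hh. apply prodF_conv; auto.
    + apply isFilter_fimage; auto.
    + intros V [W [[U [V' [HU [HV' HW]]]] HWV]].
      destruct (HGF (fun z => match z with inr a => U a | inl _ => False end)) as [W1 [HW1 HWU1]].
      { exists U; split; auto. }
      destruct HV' as [W2 [HW2 HW2']].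
      exists (fun w => W1 w /\ W2 w); split. apply fl_and; auto.
      intros [[a'|x'] t'] [h1 h2]; unfold cyl_sum_elim; simpl.
      * destruct (HWU1 _ h1).
      * apply HWV, HW. apply (HWU1 _ h1). apply (HW2' _ h2).
Qed.

Inductive eqc {Z : Type} (Rl : Z -> Z -> Prop) : Z -> Z -> Prop :=
 | eqc_base x y : Rl x y -> eqc Rl x y
 | eqc_refl x : eqc Rl x x
 | eqc_sym x y : eqc Rl x y -> eqc Rl y x
 | eqc_trans x y z : eqc Rl x y -> eqc Rl y z -> eqc Rl x z.

Definition QT {Z : Type} (Rl : Z -> Z -> Prop) : Type := { S : Z -> Prop | exists z, S = eqc Rl z }.
Definition qmap {Z : Type} (Rl : Z -> Z -> Prop) (z : Z) : QT Rl := exist _ (eqc Rl z) (ex_intro _ z eq_refl).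

Lemma qmap_eq {Z : Type} (Rl : Z -> Z -> Prop) z w : eqc Rl z w -> qmap Rl z = qmap Rl w.
Proof.
  intros H. unfold qmap.
  assert (E : eqc Rl z = eqc Rl w).
  { apply functional_extensionality; intros u. apply propositional_extensionality; split; intros h.
    - eapply eqc_trans; [apply eqc_sym, H|exact h].
    - eapply eqc_trans; [exact H|exact h]. }
  revert E. generalize (ex_intro (fun z0 : Z => eqc Rl z = eqc Rl z0) z eq_refl).
  generalize (ex_intro (fun z0 : Z => eqc Rl w = eqc Rl z0) w eq_refl).
  intros e1 e2 E. revert e1 e2. rewrite E. intros. f_equal; apply proof_irrelevance.
Qed.

Lemma qmap_inv {Z : Type} (Rl : Z -> Z -> Prop) z w : qmap Rl z = qmap Rl w -> eqc Rl z w.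
Proof.
  intros H. apply (f_equal (@proj1_sig _ _)) in H. simpl in H. rewrite H. apply eqc_refl.
Qed.

Lemma qmap_surj {Z : Type} (Rl : Z -> Z -> Prop) (c : QT Rl) : exists z, qmap Rl z = c.
Proof.
  destruct c as [S [z Hz]]. exists z. unfold qmap. subst. f_equal; apply proof_irrelevance.
Qed.

Definition qrep {Z : Type} (Rl : Z -> Z -> Prop) (c : QT Rl) : Z :=
  proj1_sig (constructive_indefinite_description _ (qmap_surj Rl c)).
Lemma qrep_spec {Z : Type} (Rl : Z -> Z -> Prop) c : qmap Rl (qrep Rl c) = c.
Proof. unfold qrep. destruct constructive_indefinite_description; auto. Qed.
Lemma qrep_qmap {Z : Type} (Rl : Z -> Z -> Prop) z : eqc Rl (qrep Rl (qmap Rl z)) z.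
Proof. apply qmap_inv, qrep_spec. Qed.

Lemma eqc_resp {Z Y : Type} (Rl : Z -> Z -> Prop) (g : Z -> Y) :
  (forall x y, Rl x y -> g x = g y) -> forall x y, eqc Rl x y -> g x = g y.
Proof. intros H x y E; induction E; auto; congruence. Qed.

Inductive qconv {Z : LimSpace} (Rl : Z -> Z -> Prop) : ((QT Rl -> Prop) -> Prop) -> QT Rl -> Prop :=
 | qc_base F c G z : isFilter F -> lconv G z -> qmap Rl z = c -> fsub (fimage (qmap Rl) G) F -> qconv Rl F c
 | qc_inter F c F1 F2 : isFilter F -> qconv Rl F1 c -> qconv Rl F2 c -> fsub (finter F1 F2) F -> qconv Rl F c.

Lemma qconv_filter {Z : LimSpace} (Rl : Z -> Z -> Prop) : forall F c, qconv Rl F c -> isFilter F.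
Proof. intros F c H; destruct H; auto. Qed.

Lemma qconv_super {Z : LimSpace} (Rl : Z -> Z -> Prop) : forall F G c, qconv Rl F c -> isFilter G -> fsub F G -> qconv Rl G c.
Proof.
  intros F G c H HG Hs. destruct H as [F c G0 z H1 H2 H3 H4|F c F1 F2 H1 H2 H3 H4].
  - apply (qc_base Rl G c G0 z); auto. intros U HU; auto.
  - apply (qc_inter Rl G c F1 F2); auto. intros U HU; auto.
Qed.

Lemma qconv_principal {Z : LimSpace} (Rl : Z -> Z -> Prop) : forall c, qconv Rl (principal c) c.
Proof.
  intros c. destruct (qmap_surj Rl c) as [z Hz].
  apply (qc_base Rl _ c (principal z) z); auto. apply isFilter_principal. apply lconv_principal.
  intros V [U [HU HUV]]. unfold principal. subst. apply HUV, HU.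
Qed.

Lemma qconv_inter {Z : LimSpace} (Rl : Z -> Z -> Prop) : forall F G c, qconv Rl F c -> qconv Rl G c -> qconv Rl (finter F G) c.
Proof.
  intros F G c H1 H2. apply (qc_inter Rl _ c F G); auto.
  apply isFilter_finter; eapply qconv_filter; eauto. intros U HU; auto.
Qed.

Definition Quot (Z : LimSpace) (Rl : Z -> Z -> Prop) : LimSpace :=
  {| carrier := QT Rl; lconv := qconv Rl;
     lconv_filter := qconv_filter Rl; lconv_super := qconv_super Rl;
     lconv_principal := qconv_principal Rl; lconv_inter := qconv_inter Rl |}.

Lemma cont_qmap {Z : LimSpace} (Rl : Z -> Z -> Prop) : @continuous Z (Quot Z Rl) (qmap Rl).
Proof.
  intros F z HF. apply (qc_base Rl _ _ F z); auto. apply isFilter_fimage, (lconv_filter Z F z HF).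
  intros U HU; auto.
Qed.


Lemma cylquot_aux {Z Y : LimSpace} (Rl : Z -> Z -> Prop) (k : QT Rl * I01 -> Y) :
  @continuous (Cyl Z) Y (fun w => k (qmap Rl (fst w), snd w)) ->
  forall lam c, qconv Rl lam c -> forall (L : (QT Rl * I01 -> Prop) -> Prop) t,
    isFilter L -> fsub lam (fimage fst L) -> I01_conv (fimage snd L) t ->
    lconv (fimage k L) (k (c, t)).
Proof.
  intros Hk lam c Hq. induction Hq as [F c G z HF HG Hz Hs|F c F1 F2 HF H1 IH1 H2 IH2 Hs];
    intros L t HL HsL HN.
  - set (K := fun w : Cyl Z => k (qmap Rl (fst w), snd w)).
    assert (C := Hk (prodF G (fimage snd L)) (z, t) (prodF_conv G _ z t HG HN)).
    simpl in C. rewrite Hz in C.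
    apply (lconv_super Y _ _ _ C). apply isFilter_fimage; auto.
    intros V [W [[U [V' [HU [HV' HW]]]] HWV]].
    assert (HU' : fimage fst L (fun c' => exists u, U u /\ qmap Rl u = c')).
    { apply HsL, Hs. exists U; split; auto. intros u Hu; exists u; auto. }
    destruct HU' as [W1 [HW1 HW1']]. destruct HV' as [W2 [HW2 HW2']].
    exists (fun w => W1 w /\ W2 w); split. apply fl_and; auto.
    intros [c' t'] [a b]. destruct (HW1' _ a) as [u [Hu Hu']]. simpl in Hu'. subst c'.
    apply (HWV (u, t')), HW; auto. apply (HW2' _ b).
  - pose proof (qconv_filter Rl _ _ H1) as Hf1. pose proof (qconv_filter Rl _ _ H2) as Hf2.
    destruct (classic (exists U1, F1 U1 /\ exists W, L W /\ forall w, W w -> ~ U1 (fst w))) as [[U1 [HU1 [W [HW HWn]]]]|NA].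
    { apply IH2; auto. intros U2 HU2.
      destruct (HsL (fun c => U1 c \/ U2 c)) as [W' [HW' HW'']].
      { apply Hs. split; [apply (fl_mono F1 U1)|apply (fl_mono F2 U2)]; auto. }
      exists (fun w => W w /\ W' w); split. apply fl_and; auto.
      intros w [a b]. destruct (HW'' _ b); auto. exfalso; apply (HWn w); auto. }
    destruct (classic (exists U2, F2 U2 /\ exists W, L W /\ forall w, W w -> ~ U2 (fst w))) as [[U2 [HU2 [W [HW HWn]]]]|NB].
    { apply IH1; auto. intros U1 HU1.
      destruct (HsL (fun c => U1 c \/ U2 c)) as [W' [HW' HW'']].
      { apply Hs. split; [apply (fl_mono F1 U1)|apply (fl_mono F2 U2)]; auto. }
      exists (fun w => W w /\ W' w); split. apply fl_and; auto.
      intros w [a b]. destruct (HW'' _ b); auto. exfalso; apply (HWn w); auto. }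
    set (Lj := fun (Fj : (QT Rl -> Prop) -> Prop) (V : QT Rl * I01 -> Prop) =>
                 exists U, Fj U /\ exists W, L W /\ forall w, W w -> U (fst w) -> V w).
    assert (HLj : forall Fj : (QT Rl -> Prop) -> Prop, isFilter Fj ->
               ~ (exists U1, Fj U1 /\ exists W, L W /\ forall w, W w -> ~ U1 (fst w)) ->
               isFilter (Lj Fj) /\ fsub Fj (fimage fst (Lj Fj)) /\ I01_conv (fimage snd (Lj Fj)) t).
    { intros Fj Hfj NN.
      assert (isFilter (Lj Fj)).
      { split; [|split; [|split]].
        - exists (fun _ => True); split. apply fl_top; auto. exists (fun _ => True); split; auto. apply fl_top; auto.
        - intros [U [HU [W [HW HWU]]]]. apply NN. exists U; split; auto. exists W; split; auto.
        - intros U V [U' [HU' [W [HW HWU]]]] HUV. exists U'; split; auto. exists W; split; auto.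
        - intros U V [U' [HU' [W [HW HWU]]]] [U'' [HU'' [W' [HW' HWU']]]].
          exists (fun c => U' c /\ U'' c); split. apply fl_and; auto.
          exists (fun w => W w /\ W' w); split. apply fl_and; auto.
          intros w [a b] [c0 d]; split; auto. }
      split; auto. split.
      - intros U HU. exists (fun w => U (fst w)); split; auto.
        exists U; split; auto. exists (fun _ => True); split; auto. apply fl_top; auto.
      - apply (I01_conv_super (fimage snd L)); auto. apply isFilter_fimage; auto.
        apply fimage_mono. intros V HV. exists (fun _ => True); split. apply fl_top; auto.
        exists V; split; auto. }
    destruct (HLj F1 Hf1 NA) as [A1 [B1 C1]]. destruct (HLj F2 Hf2 NB) as [A2 [B2 C2]].
    specialize (IH1 _ t A1 B1 C1). specialize (IH2 _ t A2 B2 C2).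
    apply (lconv_super Y _ _ _ (lconv_inter Y _ _ _ IH1 IH2)). apply isFilter_fimage; auto.
    intros V [[W1' [[U1 [HU1 [W1 [HW1 HW1']]]] HV1]] [W2' [[U2 [HU2 [W2 [HW2 HW2']]]] HV2]]].
    destruct (HsL (fun c => U1 c \/ U2 c)) as [W3 [HW3 HW3']].
    { apply Hs. split; [apply (fl_mono F1 U1)|apply (fl_mono F2 U2)]; auto. }
    exists (fun w => W1 w /\ W2 w /\ W3 w); split. apply fl_and; auto. apply fl_and; auto.
    intros w [a [b d]]. destruct (HW3' _ d); [apply HV1, HW1'|apply HV2, HW2']; auto.
Qed.

Lemma cont_from_cylquot {Z Y : LimSpace} (Rl : Z -> Z -> Prop) (k : Cyl (Quot Z Rl) -> Y) :
  @continuous (Cyl Z) Y (fun w => k (qmap Rl (fst w), snd w)) -> continuous k.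
Proof.
  intros Hk L [c t] [HL [Hq HN]]. simpl in *.
  apply (cylquot_aux Rl k Hk _ c Hq L t HL); auto. intros U HU; auto.
Qed.

Lemma cont_from_quot {Z Y : LimSpace} (Rl : Z -> Z -> Prop) (k : Quot Z Rl -> Y) :
  continuous (fun z => k (qmap Rl z)) -> continuous k.
Proof.
  intros Hk.
  assert (C : @continuous (Cyl (Quot Z Rl)) Y (fun w => k (fst w))).
  { apply cont_from_cylquot. simpl.
    apply (cont_comp (fun w : Cyl Z => fst w) (fun z => k (qmap Rl z))); auto. apply cont_fst. }
  apply (cont_comp (@cyl_in (Quot Z Rl) false) (fun w => k (fst w)) (cont_cyl_in false) C).
Qed.

Definition qlift {Z Y : Type} (Rl : Z -> Z -> Prop) (g : Z -> Y) (c : QT Rl) : Y := g (qrep Rl c).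
Lemma qlift_eq {Z Y : Type} (Rl : Z -> Z -> Prop) (g : Z -> Y) :
  (forall x y, Rl x y -> g x = g y) -> forall z, qlift Rl g (qmap Rl z) = g z.
Proof. intros H z. unfold qlift. apply (eqc_resp Rl g H). apply qrep_qmap. Qed.
Lemma cont_qlift {Z Y : LimSpace} (Rl : Z -> Z -> Prop) (g : Z -> Y) :
  (forall x y, Rl x y -> g x = g y) -> continuous g -> @continuous (Quot Z Rl) Y (qlift Rl g).
Proof.
  intros H Hg. apply cont_from_quot. apply (cont_ext g); auto. intros z; rewrite qlift_eq; auto.
Qed.

Definition cqlift {Z Y : Type} (Rl : Z -> Z -> Prop) (g : Z * I01 -> Y) (w : QT Rl * I01) : Y :=
  g (qrep Rl (fst w), snd w).
Lemma cqlift_eq {Z Y : Type} (Rl : Z -> Z -> Prop) (g : Z * I01 -> Y) :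
  (forall x y t, Rl x y -> g (x, t) = g (y, t)) -> forall z t, cqlift Rl g (qmap Rl z, t) = g (z, t).
Proof.
  intros H z t. unfold cqlift; simpl. apply (eqc_resp Rl (fun x => g (x, t))); auto. apply qrep_qmap.
Qed.
Lemma cont_cqlift {Z Y : LimSpace} (Rl : Z -> Z -> Prop) (g : Cyl Z -> Y) :
  (forall x y t, Rl x y -> g (x, t) = g (y, t)) -> continuous g -> @continuous (Cyl (Quot Z Rl)) Y (cqlift Rl g).
Proof.
  intros H Hg. apply cont_from_cylquot. apply (cont_ext g); auto.
  intros [z t]; simpl. rewrite cqlift_eq; auto.
Qed.


Lemma cont_ff {X : LimSpace} : @continuous (Cyl (Cyl X)) X (fun w => fst (fst w)).
Proof. apply (cont_comp (fun w : Cyl (Cyl X) => fst w) (fun w : Cyl X => fst w)); apply cont_fst. Qed.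
Lemma cont_sf {X : LimSpace} : @continuous (Cyl (Cyl X)) UnitInterval (fun w => snd (fst w)).
Proof. apply (@cont_comp (Cyl (Cyl X)) (Cyl X) UnitInterval (fun w => fst w) (fun w => snd w)). apply cont_fst. apply cont_snd. Qed.
Lemma rcont_sf {X : LimSpace} : @rcont (Cyl (Cyl X)) (fun w => proj1_sig (snd (fst w))).
Proof. apply (@rcont_comp (Cyl (Cyl X)) (Cyl X) (fun w => fst w) (fun w => proj1_sig (snd w))). apply cont_fst. apply rcont_snd. Qed.

Lemma HEP_cyl {B A : LimSpace} (i : B -> A) : HEP i -> HEP (cyl_map i : Cyl B -> Cyl A).
Proof.
  intros Hi k Y f G Hf HG Hc.
  set (Rm := fun (z w : SumSp A (Cyl B)) => exists b, z = inl (i b) /\ w = inr (b, endpt k)).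
  destruct (Hi k (Quot (SumSp A (Cyl B)) Rm) (fun a => qmap Rm (inl a)) (fun w => qmap Rm (inr w)))
    as [r [Hr [Hr1 Hr2]]].
  - apply (@cont_comp A (SumSp A (Cyl B)) (Quot _ Rm) inl (qmap Rm)). apply cont_inl. apply cont_qmap.
  - apply (@cont_comp (Cyl B) (SumSp A (Cyl B)) (Quot _ Rm) inr (qmap Rm)). apply cont_inr. apply cont_qmap.
  - intros b. apply qmap_eq, eqc_base. exists b; split; reflexivity.
  - set (h := fun w : Cyl (Cyl B) => G ((fst (fst w), snd w), snd (fst w))).
    assert (Hh : continuous h).
    { unfold h. apply (@cont_comp (Cyl (Cyl B)) (Cyl (Cyl B)) Y _ G); auto.
      apply (@cont_pair (Cyl (Cyl B)) (Cyl B) (fun w => (fst (fst w), snd w)) (fun w => snd (fst w))).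
      - apply (@cont_pair (Cyl (Cyl B)) B (fun w => fst (fst w)) (fun w => snd w)). apply cont_ff. apply cont_snd.
      - apply cont_sf. }
    set (phi := @cyl_sum_elim A (Cyl B) Y f h).
    assert (Hphi : forall x y t, Rm x y -> phi (x, t) = phi (y, t)).
    { intros x y t [b [-> ->]]. unfold phi, cyl_sum_elim, h; simpl.
      apply (Hc (b, t)). }
    assert (Cphi : @continuous (Cyl (SumSp A (Cyl B))) Y phi) by (apply cont_cyl_sum_elim; auto).
    exists (fun w : Cyl (Cyl A) => cqlift Rm phi (r (fst (fst w), snd w), snd (fst w))).
    split; [|split].
    + apply (@cont_comp (Cyl (Cyl A)) (Cyl (Quot _ Rm)) Y (fun w => (r (fst (fst w), snd w), snd (fst w))) (cqlift Rm phi)).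
      * apply (@cont_pair (Cyl (Cyl A)) (Quot _ Rm) (fun w => r (fst (fst w), snd w)) (fun w => snd (fst w))).
        -- apply (@cont_comp (Cyl (Cyl A)) (Cyl A) _ _ r); auto.
           apply (@cont_pair (Cyl (Cyl A)) A (fun w => fst (fst w)) (fun w => snd w)). apply cont_ff. apply cont_snd.
        -- apply cont_sf.
      * apply cont_cqlift; auto.
    + intros [a t]. simpl. specialize (Hr1 a). unfold cyl_in in Hr1. rewrite Hr1.
      rewrite cqlift_eq; auto.
    + intros [[b t] s]. simpl. specialize (Hr2 (b, s)). unfold cyl_map in Hr2; simpl in Hr2. rewrite Hr2.
      rewrite cqlift_eq; auto.
Qed.


Lemma cont_pair1 {W X : LimSpace} (h : W -> X) (p : W -> R) :
  continuous h -> rcont p -> @continuous W (Cyl X) (fun w => (h w, mkI (p w))).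
Proof. intros; apply (@cont_pair W X h (fun w => mkI (p w))); auto. apply cont_mkI; auto. Qed.

Lemma cont_pair2 {W X : LimSpace} (h : W -> X) (p q : W -> R) :
  continuous h -> rcont p -> rcont q -> @continuous W (Cyl (Cyl X)) (fun w => ((h w, mkI (p w)), mkI (q w))).
Proof.
  intros; apply (@cont_pair W (Cyl X) (fun w => (h w, mkI (p w))) (fun w => mkI (q w))).
  apply cont_pair1; auto. apply cont_mkI; auto.
Qed.

Ltac ibnd := repeat match goal with x : I01 |- _ =>
  lazymatch goal with _ : 0 <= proj1_sig x <= 1 |- _ => fail | _ => pose proof (I01_bnd x) end end.
Ltac rsolve := ibnd; simpl in *; unfold clamp, Rmax, Rmin in *; repeat destruct Rle_dec; lra.
Ltac ieq := apply I01_eq; rsolve.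

Lemma endpt0 : endpt false = I0. Proof. reflexivity. Qed.

Lemma corner {B A : LimSpace} (i : B -> A) : HEP (cyl_map i : Cyl B -> Cyl A) ->
  forall (Y : LimSpace) (Dl Db : Cyl A -> Y) (Gc : Cyl (Cyl B) -> Y),
  continuous Dl -> continuous Db -> continuous Gc ->
  (forall a, Dl (a, I0) = Db (a, I0)) ->
  (forall b s, Dl (i b, s) = Gc ((b, I0), s)) ->
  (forall b t, Db (i b, t) = Gc ((b, t), I0)) ->
  exists H : Cyl (Cyl A) -> Y, continuous H /\
    (forall a s, H ((a, I0), s) = Dl (a, s)) /\
    (forall a t, H ((a, t), I0) = Db (a, t)) /\
    (forall b t s, H ((i b, t), s) = Gc ((b, t), s)).
Proof.
  intros Hi Y Dl Db Gc HDl HDb HGc E0 El Eb.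
  set (D := fun z : Cyl A => if Rle_dec (2 * proj1_sig (snd z) - 1) 0
              then Dl (fst z, mkI (1 - 2 * proj1_sig (snd z)))
              else Db (fst z, mkI (2 * proj1_sig (snd z) - 1))).
  assert (HD : continuous D).
  { apply paste.
    - apply rcont_minus. apply rcont_scal, rcont_snd. apply rcont_const.
    - apply (cont_comp _ Dl); auto. apply cont_pair1. apply cont_fst.
      apply rcont_minus. apply rcont_const. apply rcont_scal, rcont_snd.
    - apply (cont_comp _ Db); auto. apply cont_pair1. apply cont_fst.
      apply rcont_minus. apply rcont_scal, rcont_snd. apply rcont_const.
    - intros z Hz. rewrite (mkI_eq I0 (1 - 2 * proj1_sig (snd z))) by (simpl; lra).
      rewrite (mkI_eq I0 (2 * proj1_sig (snd z) - 1)) by (simpl; lra). auto. }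
  set (m := fun v : Cyl (Cyl B) => proj1_sig (snd v)).
  set (w := fun v : Cyl (Cyl B) => proj1_sig (snd (fst v))).
  set (Gc' := fun v : Cyl (Cyl B) =>
     Gc ((fst (fst v), mkI (m v + Rmax (2 * w v - 1) 0)), mkI (m v + Rmax (1 - 2 * w v) 0))).
  assert (HGc' : continuous Gc').
  { apply (cont_comp _ Gc); auto. apply cont_pair2. apply cont_ff.
    - apply rcont_plus. apply rcont_snd. apply rcont_max; [|apply rcont_const].
      apply rcont_minus. apply rcont_scal, rcont_sf. apply rcont_const.
    - apply rcont_plus. apply rcont_snd. apply rcont_max; [|apply rcont_const].
      apply rcont_minus. apply rcont_const. apply rcont_scal, rcont_sf. }
  destruct (Hi false Y D Gc' HD HGc') as [Ht [HHt [Ht1 Ht2]]].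
  { intros [b x]. unfold D, Gc', m, w, cyl_map, cyl_in; simpl.
    destruct Rle_dec as [r|r].
    - rewrite El. f_equal; f_equal; [f_equal|]; ieq.
    - rewrite Eb. f_equal; f_equal; [f_equal|]; ieq. }
  exists (fun v : Cyl (Cyl A) => Ht ((fst (fst v), mkI ((proj1_sig (snd (fst v)) - proj1_sig (snd v) + 1) / 2)),
                                       mkI (Rmin (proj1_sig (snd (fst v))) (proj1_sig (snd v))))).
  split; [|split; [|split]].
  - apply (cont_comp _ Ht); auto. apply cont_pair2. apply cont_ff.
      apply (rcont_lip1 (fun v : Cyl (Cyl A) => proj1_sig (snd (fst v)) - proj1_sig (snd v) + 1) (fun x => x / 2) 1).
      lra. intros a c. unfold Rabs; repeat destruct Rcase_abs; lra.
      apply rcont_plus. apply rcont_minus. apply rcont_sf. apply rcont_snd. apply rcont_const.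
    + apply rcont_min. apply rcont_sf. apply rcont_snd.
  - intros a s. simpl.
    rewrite (mkI_eq (endpt false) (Rmin 0 (proj1_sig s))) by rsolve.
    transitivity (D (a, mkI ((0 - proj1_sig s + 1) / 2))). { apply (Ht1 (a, _)). }
    unfold D; simpl. destruct Rle_dec as [r|r]; [|exfalso; rsolve].
    f_equal; f_equal. ieq.
  - intros a t. simpl.
    rewrite (mkI_eq (endpt false) (Rmin (proj1_sig t) 0)) by rsolve.
    transitivity (D (a, mkI ((proj1_sig t - 0 + 1) / 2))). { apply (Ht1 (a, _)). }
    unfold D; simpl. destruct Rle_dec as [r|r].
    + assert (t = I0) by ieq. subst t. rewrite <- E0. f_equal; f_equal. ieq.
    + f_equal; f_equal. ieq.
  - intros b t s. simpl.
    etransitivity. { apply (Ht2 ((b, mkI ((proj1_sig t - proj1_sig s + 1) / 2)), mkI (Rmin (proj1_sig t) (proj1_sig s)))). }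
    unfold Gc', m, w; simpl.
    f_equal; f_equal; [f_equal|]; ieq.
Qed.

Ltac fe := f_equal; repeat match goal with |- (_, _) = (_, _) => f_equal end; try reflexivity; try ieq.


Lemma three_side0 {B A : LimSpace} (i : B -> A) : HEP (cyl_map i : Cyl B -> Cyl A) ->
  forall (Y : LimSpace) (f G0 G1 : Cyl A -> Y) (Gc : Cyl (Cyl B) -> Y),
  continuous f -> continuous G0 -> continuous G1 -> continuous Gc ->
  (forall a, f (a, I0) = G0 (a, I0)) ->
  (forall a, f (a, I1) = G1 (a, I0)) ->
  (forall b t, f (i b, t) = Gc ((b, t), I0)) ->
  (forall b s, G0 (i b, s) = Gc ((b, I0), s)) ->
  (forall b s, G1 (i b, s) = Gc ((b, I1), s)) ->
  exists H : Cyl (Cyl A) -> Y, continuous H /\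
    (forall a t, H ((a, t), I0) = f (a, t)) /\
    (forall a s, H ((a, I0), s) = G0 (a, s)) /\
    (forall a s, H ((a, I1), s) = G1 (a, s)) /\
    (forall b t s, H ((i b, t), s) = Gc ((b, t), s)).
Proof.
  intros Hi Y f G0 G1 Gc Hf HG0 HG1 HGc E0 E1 Ec E0c E1c.
  destruct (corner i Hi Y G0 f Gc HG0 Hf HGc ltac:(intros; symmetry; auto) ltac:(auto) ltac:(intros; symmetry; auto))
    as [H1 [C1 [H1l [H1b H1c]]]].
  set (Db2 := fun z : Cyl A => H1 ((fst z, mkI (1 - proj1_sig (snd z))), mkI (proj1_sig (snd z)))).
  assert (HDb2 : continuous Db2).
  { apply (cont_comp _ H1); auto. apply cont_pair2. apply cont_fst.
    apply rcont_minus. apply rcont_const. apply rcont_snd. apply rcont_snd. }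
  set (Gc2 := fun v : Cyl (Cyl B) => Gc ((fst (fst v), mkI (1 - proj1_sig (snd (fst v)))),
                                          mkI (proj1_sig (snd (fst v)) + proj1_sig (snd v)))).
  assert (HGc2 : continuous Gc2).
  { apply (cont_comp _ Gc); auto. apply cont_pair2. apply cont_ff.
    apply rcont_minus. apply rcont_const. apply rcont_sf. apply rcont_plus. apply rcont_sf. apply rcont_snd. }
  destruct (corner i Hi Y G1 Db2 Gc2 HG1 HDb2 HGc2) as [H2 [C2 [H2l [H2b H2c]]]].
  { intros a. unfold Db2; simpl.
    rewrite (mkI_eq I1 (1 - 0)) by (simpl; lra). rewrite (mkI_eq I0 0) by (simpl; lra).
    rewrite H1b. auto. }
  { intros b s. unfold Gc2; simpl. rewrite E1c. fe. }
  { intros b t. unfold Db2, Gc2; simpl. rewrite H1c. fe. }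
  exists (fun v : Cyl (Cyl A) => if Rle_dec (proj1_sig (snd (fst v)) + proj1_sig (snd v) - 1) 0 then H1 v
            else H2 ((fst (fst v), mkI (1 - proj1_sig (snd (fst v)))),
                     mkI (proj1_sig (snd (fst v)) + proj1_sig (snd v) - 1))).
  split; [|split; [|split; [|split]]].
  - apply paste; auto.
    + apply rcont_minus. apply rcont_plus. apply rcont_sf. apply rcont_snd. apply rcont_const.
    + apply (cont_comp _ H2); auto. apply cont_pair2. apply cont_ff.
      apply rcont_minus. apply rcont_const. apply rcont_sf.
      apply rcont_minus. apply rcont_plus. apply rcont_sf. apply rcont_snd. apply rcont_const.
    + intros [[a t] s] Hz. simpl in *.
      rewrite (mkI_eq I0 (proj1_sig t + proj1_sig s - 1)) by (simpl; lra).
      rewrite H2b. unfold Db2; simpl. fe.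
  - intros a t. simpl. destruct Rle_dec as [r|r]; [auto|exfalso; rsolve].
  - intros a s. simpl. destruct Rle_dec as [r|r]; [auto|exfalso; rsolve].
  - intros a s. simpl. destruct Rle_dec as [r|r].
    + assert (s = I0) by ieq. subst s. rewrite H1b, E1. auto.
    + rewrite (mkI_eq I0 (1 - 1)) by (simpl; lra). rewrite H2l. fe.
  - intros b t s. simpl. destruct Rle_dec as [r|r]; auto.
    rewrite H2c. unfold Gc2; simpl. fe.
Qed.

Definition fl (x : I01) : I01 := mkI (1 - proj1_sig x).
Lemma fl_fl x : fl (fl x) = x. Proof. unfold fl; ieq. Qed.
Lemma fl0 : fl I0 = I1. Proof. unfold fl; ieq. Qed.
Lemma fl1 : fl I1 = I0. Proof. unfold fl; ieq. Qed.
Lemma cont_fl2 {X : LimSpace} : @continuous (Cyl X) (Cyl X) (fun z => (fst z, fl (snd z))).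
Proof. unfold fl. apply cont_pair1. apply cont_fst. apply rcont_minus. apply rcont_const. apply rcont_snd. Qed.

Lemma three_side {B A : LimSpace} (i : B -> A) : HEP (cyl_map i : Cyl B -> Cyl A) ->
  forall (k : bool) (Y : LimSpace) (f G0 G1 : Cyl A -> Y) (Gc : Cyl (Cyl B) -> Y),
  continuous f -> continuous G0 -> continuous G1 -> continuous Gc ->
  (forall a, f (a, I0) = G0 (a, endpt k)) ->
  (forall a, f (a, I1) = G1 (a, endpt k)) ->
  (forall b t, f (i b, t) = Gc ((b, t), endpt k)) ->
  (forall b s, G0 (i b, s) = Gc ((b, I0), s)) ->
  (forall b s, G1 (i b, s) = Gc ((b, I1), s)) ->
  exists H : Cyl (Cyl A) -> Y, continuous H /\
    (forall a t, H ((a, t), endpt k) = f (a, t)) /\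
    (forall a s, H ((a, I0), s) = G0 (a, s)) /\
    (forall a s, H ((a, I1), s) = G1 (a, s)) /\
    (forall b t s, H ((i b, t), s) = Gc ((b, t), s)).
Proof.
  intros Hi [|] Y f G0 G1 Gc Hf HG0 HG1 HGc E0 E1 Ec E0c E1c.
  - destruct (three_side0 i Hi Y f (fun z => G0 (fst z, fl (snd z))) (fun z => G1 (fst z, fl (snd z)))
                (fun v => Gc (fst v, fl (snd v)))) as [H [C [Hb [Hl [Hr Hc]]]]].
    + auto.
    + apply (cont_comp _ G0); auto. apply cont_fl2.
    + apply (cont_comp _ G1); auto. apply cont_fl2.
    + apply (cont_comp _ Gc); auto. apply cont_fl2.
    + intros a; simpl; rewrite fl0; auto.
    + intros a; simpl; rewrite fl0; auto.
    + intros b t; simpl; rewrite fl0; auto.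
    + intros b s; simpl; auto.
    + intros b s; simpl; auto.
    + exists (fun v => H (fst v, fl (snd v))). split; [|split; [|split; [|split]]].
      * apply (cont_comp _ H); auto. apply cont_fl2.
      * intros a t; simpl. rewrite <- (Hb a t). fe.
      * intros a s; simpl. rewrite Hl; simpl. rewrite fl_fl; auto.
      * intros a s; simpl. rewrite Hr; simpl. rewrite fl_fl; auto.
      * intros b t s; simpl. rewrite Hc; simpl. rewrite fl_fl; auto.
  - apply (three_side0 i Hi Y f G0 G1 Gc); auto.
Qed.


Lemma cyl_data : Lim_cylinder_data.
Proof.
  split; [|split; [|split; [|split; [|split; [|split; [|split; [|split]]]]]]].
  - intros X Y f Hf; apply cont_cyl_map; auto.
  - intros X [x t]; reflexivity.
  - intros X Y Z f g [x t]; reflexivity.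
  - intros X k; apply cont_cyl_in.
  - intros X; apply cont_fst.
  - intros; reflexivity.
  - intros X Y f [x t]; reflexivity.
  - intros; reflexivity.
  - intros Y; split.
    + intros F e; destruct e.
    + intros g _ e; destruct e.
Qed.

Lemma cyl_axiom : cylinder_axiom.
Proof.
  exists (fun z : Cyl EmptyLim => fst z). split.
  - intros F [e t]; destruct e.
  - exists (fun e : EmptyLim => match e with end). split; [|split].
    + intros F e; destruct e.
    + intros [e t]; destruct e.
    + intros e; destruct e.
Qed.

Lemma cof_axiom : cofibration_axiom.
Proof.
  split; [|split; [|split]].
  - intros A B f [Hf [g [Hg [E1 E2]]]]. split; auto.
    intros k Y h G Hh HG Hc. exists (fun z => G (cyl_map g z)). split; [|split].
    + apply (cont_comp _ G); auto. apply cont_cyl_map; auto.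
    + intros b. transitivity (G (cyl_in k (g b))). reflexivity. rewrite <- Hc, E2; auto.
    + intros [a t]. unfold cyl_map; simpl. rewrite E1; auto.
  - intros X. split. intros F e; destruct e.
    intros k Y f G Hf HG Hc. exists (fun z => f (fst z)). split; [|split].
    + apply (cont_comp _ f); auto. apply cont_fst.
    + intros; reflexivity.
    + intros [e t]; destruct e.
  - intros A B C f g [Cf Hf] [Cg Hg]. split. apply cont_comp; auto.
    intros k Y h G Hh HG Hc.
    destruct (Hf k Y (fun b => h (g b)) G (cont_comp g h Cg Hh) HG Hc) as [H1 [C1 [H1a H1b]]].
    destruct (Hg k Y h H1 Hh C1 (fun b => eq_sym (H1a b))) as [H2 [C2 [H2a H2b]]].
    exists H2. split; [|split]; auto.
    intros z. transitivity (H2 (cyl_map g (cyl_map f z))). reflexivity. rewrite H2b. apply H1b.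
  - intros B A i [_ H]; exact H.
Qed.

Lemma interchange : interchange_axiom.
Proof.
  intros X. exists (fun w : Cyl (Cyl X) => ((fst (fst w), snd w), snd (fst w)) : Cyl (Cyl X)). split.
  - apply (@cont_pair (Cyl (Cyl X)) (Cyl X) (fun w => (fst (fst w), snd w)) (fun w => snd (fst w))).
    + apply (@cont_pair (Cyl (Cyl X)) X (fun w => fst (fst w)) (fun w => snd w)). apply cont_ff. apply cont_snd.
    + apply cont_sf.
  - intros k; split; intros [x s]; reflexivity.
Qed.

Definition PropSp : LimSpace :=
  {| carrier := Prop; lconv := fun F _ => isFilter F;
     lconv_filter := fun F x H => H;
     lconv_super := fun F G x _ HG _ => HG;
     lconv_principal := fun x => isFilter_principal x;
     lconv_inter := fun F G x H1 H2 => isFilter_finter F G H1 H2 |}.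

Lemma cont_PropSp {X : LimSpace} (g : X -> PropSp) : continuous g.
Proof. intros F x HF. apply isFilter_fimage, (lconv_filter X F x HF). Qed.

Lemma relcyl_surj {B A P : LimSpace} (i : B -> A) (a0 : A -> P) (c : Cyl B -> P) (a1 : A -> P) :
  IsRelCylColimit i a0 c a1 ->
  forall p, (exists a, p = a0 a) \/ (exists z, p = c z) \/ (exists a, p = a1 a).
Proof.
  intros [_ [_ [_ [_ [_ U]]]]] p.
  destruct (U PropSp (fun _ => True) (fun _ => True) (fun _ => True)
              (cont_PropSp _) (cont_PropSp _) (cont_PropSp _) (fun _ => eq_refl) (fun _ => eq_refl))
    as [k [_ [_ [_ [_ Uniq]]]]].
  set (k2 := fun p : P => (exists a, p = a0 a) \/ (exists z, p = c z) \/ (exists a, p = a1 a)).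
  assert (E1 := Uniq (fun _ => True) (cont_PropSp _) (fun _ => eq_refl) (fun _ => eq_refl) (fun _ => eq_refl)).
  assert (E2 : forall p, k2 p = k p).
  { apply Uniq. apply cont_PropSp.
    - intros a. apply propositional_extensionality; split; auto. intros _; left; eauto.
    - intros z. apply propositional_extensionality; split; auto. intros _; right; left; eauto.
    - intros a. apply propositional_extensionality; split; auto. intros _; right; right; eauto. }
  change (k2 p). rewrite (E2 p), <- (E1 p). exact I.
Qed.


Lemma pushout_ok : pushout_axiom.
Proof.
  intros B A X i f [Hci Hi] Hf.
  set (Rl := fun (z w : SumSp A X) => exists b, z = inl (i b) /\ w = inr (f b)).
  set (P := Quot (SumSp A X) Rl).
  set (u := (fun a => qmap Rl (inl a)) : A -> P).
  set (v := (fun x => qmap Rl (inr x)) : X -> P).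
  assert (Hu : continuous u).
  { apply (@cont_comp A (SumSp A X) P inl (qmap Rl)). apply cont_inl. apply cont_qmap. }
  assert (Hv : continuous v).
  { apply (@cont_comp X (SumSp A X) P inr (qmap Rl)). apply cont_inr. apply cont_qmap. }
  assert (Huv : forall b, u (i b) = v (f b)).
  { intros b. apply qmap_eq, eqc_base. exists b; auto. }
  assert (Hsurj : forall p : P, (exists a, p = u a) \/ (exists x, p = v x)).
  { intros p. destruct (qmap_surj Rl p) as [[a|x] <-]; [left|right]; eexists; reflexivity. }
  assert (PO1 : IsPushout i f u v).
  { split; [auto|split; [auto|split; [auto|]]].
    intros Y g h Hg Hh E.
    assert (Resp : forall x y, Rl x y -> sum_elim g h x = sum_elim g h y).
    { intros x y [b [-> ->]]; simpl; auto. }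
    exists (qlift Rl (sum_elim g h)). split; [|split; [|split]].
    - apply cont_qlift; auto. apply cont_sum_elim; auto.
    - intros a. unfold u. rewrite qlift_eq; auto.
    - intros x. unfold v. rewrite qlift_eq; auto.
    - intros k' Hk' E1 E2 p. destruct (Hsurj p) as [[a ->]|[x ->]].
      + rewrite E1. unfold u. rewrite qlift_eq; auto.
      + rewrite E2. unfold v. rewrite qlift_eq; auto. }
  assert (PO2 : IsPushout (cyl_map i) (cyl_map f) (cyl_map u) (cyl_map v)).
  { split; [apply cont_cyl_map; auto|split; [apply cont_cyl_map; auto|split]].
    - intros [b t]. unfold cyl_map; simpl. rewrite Huv; auto.
    - intros Y g h Hg Hh E.
      assert (Resp : forall x y t, Rl x y -> cyl_sum_elim g h (x, t) = cyl_sum_elim g h (y, t)).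
      { intros x y t [b [-> ->]]. unfold cyl_sum_elim; simpl. apply (E (b, t)). }
      exists (cqlift Rl (cyl_sum_elim g h)). split; [|split; [|split]].
      + apply cont_cqlift; auto. apply cont_cyl_sum_elim; auto.
      + intros [a t]. unfold cyl_map, u; simpl. rewrite cqlift_eq; auto.
      + intros [x t]. unfold cyl_map, v; simpl. rewrite cqlift_eq; auto.
      + intros k' Hk' E1 E2 [p t]. destruct (Hsurj p) as [[a ->]|[x ->]].
        * transitivity (g (a, t)); [exact (E1 (a, t))|]. symmetry; apply (cqlift_eq Rl (cyl_sum_elim g h) Resp (inl a) t).
        * transitivity (h (x, t)); [exact (E2 (x, t))|]. symmetry; apply (cqlift_eq Rl (cyl_sum_elim g h) Resp (inr x) t). }
  exists P, u, v. split; auto. split; auto. split; auto.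
  intros k Y g G Hg HG Hc.
  destruct (Hi k Y (fun a => g (u a)) (fun z => G (cyl_map f z)) (cont_comp u g Hu Hg)
              (cont_comp _ G (cont_cyl_map f Hf) HG)) as [HA [CA [HA1 HA2]]].
  { intros b. rewrite Huv. apply (Hc (f b)). }
  destruct PO2 as [_ [_ [_ U]]]. destruct (U Y HA G CA HG HA2) as [H [CH [H1 [H2 _]]]].
  exists H. split; [auto|split; auto].
  intros p. destruct (Hsurj p) as [[a ->]|[x ->]].
  - rewrite <- HA1. exact (H1 (cyl_in k a)).
  - rewrite Hc. exact (H2 (cyl_in k x)).
Qed.

Lemma relcyl : relative_cylinder_axiom.
Proof.
  intros B A i [Hci Hi]. split.
  - set (Z := SumSp A (SumSp (Cyl B) A)).
    set (Rl := fun (z w : Z) =>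
      (exists b, z = inl (i b) /\ w = inr (inl (b, endpt false))) \/
      (exists b, z = inr (inr (i b)) /\ w = inr (inl (b, endpt true)))).
    set (P := Quot Z Rl).
    exists P, (fun a => qmap Rl (inl a)), (fun z => qmap Rl (inr (inl z))), (fun a => qmap Rl (inr (inr a))).
    assert (Hsurj : forall p : P, (exists a, p = qmap Rl (inl a)) \/ (exists z, p = qmap Rl (inr (inl z))) \/
                                  (exists a, p = qmap Rl (inr (inr a)))).
    { intros p. destruct (qmap_surj Rl p) as [[a|[z|a]] <-]; [left|right; left|right; right]; eexists; reflexivity. }
    split; [|split; [|split; [|split; [|split]]]].
    + apply (@cont_comp A Z P inl (qmap Rl)). apply cont_inl. apply cont_qmap.
    + apply (@cont_comp (Cyl B) Z P (fun z => inr (inl z)) (qmap Rl)).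
      apply (@cont_comp (Cyl B) (SumSp (Cyl B) A) Z inl inr). apply cont_inl. apply cont_inr. apply cont_qmap.
    + apply (@cont_comp A Z P (fun z => inr (inr z)) (qmap Rl)).
      apply (@cont_comp A (SumSp (Cyl B) A) Z inr inr). apply cont_inr. apply cont_inr. apply cont_qmap.
    + intros b. apply qmap_eq, eqc_base. left; exists b; auto.
    + intros b. apply qmap_eq, eqc_base. right; exists b; auto.
    + intros Y g0 h g1 Hg0 Hh Hg1 E0 E1.
      set (gg := @sum_elim A (SumSp (Cyl B) A) Y g0 (sum_elim h g1)).
      assert (Resp : forall x y, Rl x y -> gg x = gg y).
      { intros x y [[b [-> ->]]|[b [-> ->]]]; simpl; auto. }
      exists (qlift Rl gg). split; [|split; [|split; [|split]]].
      * apply cont_qlift; auto. apply cont_sum_elim; auto. apply cont_sum_elim; auto.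
      * intros a. rewrite qlift_eq; auto.
      * intros z. rewrite qlift_eq; auto.
      * intros a. rewrite qlift_eq; auto.
      * intros k' Hk' F0 F1 F2 p. destruct (Hsurj p) as [[a ->]|[[z ->]|[a ->]]];
          rewrite qlift_eq; auto.
  - intros P a0 c a1 HC j Hj Ej0 Ejc Ej1. split; auto.
    pose proof (relcyl_surj i a0 c a1 HC) as Hsurj.
    destruct HC as [Ca0 [Cc [Ca1 [Eq0 [Eq1 _]]]]].
    intros k Y f G Hf HG Hc.
    destruct (three_side i (HEP_cyl i Hi) k Y f (fun z => G (a0 (fst z), snd z)) (fun z => G (a1 (fst z), snd z))
                (fun v => G (c (fst v), snd v))) as [H [CH [Hb [Hl [Hr Hcc]]]]].
    + auto.
    + apply (cont_comp _ G); auto. apply (cont_cyl_map a0); auto.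
    + apply (cont_comp _ G); auto. apply (cont_cyl_map a1); auto.
    + apply (cont_comp _ G); auto. apply (cont_cyl_map c); auto.
    + intros a. transitivity (f (j (a0 a))). rewrite Ej0; reflexivity. apply Hc.
    + intros a. transitivity (f (j (a1 a))). rewrite Ej1; reflexivity. apply Hc.
    + intros b t. transitivity (f (j (c (b, t)))). rewrite Ejc; reflexivity. apply Hc.
    + intros b s. simpl. rewrite Eq0. reflexivity.
    + intros b s. simpl. rewrite Eq1. reflexivity.
    + exists H. split; [auto|split].
      * intros [a t]. exact (Hb a t).
      * intros [p s]. unfold cyl_map; simpl.
        destruct (Hsurj p) as [[a ->]|[[[b t] ->]|[a ->]]].
        -- rewrite Ej0. exact (Hl a s).
        -- rewrite Ejc. exact (Hcc b t s).
        -- rewrite Ej1. exact (Hr a s).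
Qed.

Theorem mainTheorem3 : Lim_is_ICategory.
Proof.
  split; [exact cyl_data|split; [exact cyl_axiom|split; [exact pushout_ok|split; [exact cof_axiom|split; [exact interchange|exact relcyl]]]]].
Qed.
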